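(* Let $\pi$ be an $(m,n)$-parking function with bird's eye permutation $\omega$. Then $\pi\circ\omega$ is the shifted parent map of a priority forest on $[n]_0$ with $m$ edges.
   Context: $[n]=\{1,\dots,n\}$, $[n]_0=\{0,\dots,n\}$. An $(m,n)$-parking function is a map $\pi:[m]\to[n]$ such that when cars $1,\dots,m$ arrive in this order to a street with spots $1,\dots,n$, and car $i$ parks at the first empty spot $\ge\pi(i)$, all $m$ cars park. Its bird's eye permutation $\omega:[n]\to[m]$ is the partial permutation sending each occupied spot to the car parked there (undefined at empty spots); $\pi\circ\omega$ is the partial function $[n]\to[n]$ defined on occupied spots. A priority forest on $[n]_0$ is a rooted forest with vertex set $[n]_0$ whose component trees $T_0,T_1,\dots$ are increasing (each non-root vertex has a larger label than its parent) and satisfy: for $j<k$ every label of $T_j$ is smaller than every label of $T_k$. Its shifted parent map is the partial function $s_P:[n]\to[n]$ given by $s_P(i)=p(i)+1$ for each non-root vertex $i$ with parent $p(i)$, and undefined at roots. *)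

(* Defs.v *)
From mathcomp Require Import all_boot.
Set Implicit Arguments. Unset Strict Implicit. Unset Printing Implicit Defensive.

(* World: plain MathComp (boot).  Cars are 1..m, spots are 1..n (as nats).
   A parking preference is pi : nat -> nat; only its values on [m] matter. *)

(* An occupancy state: spot -> the car parked there (None = empty). *)
Definition occupancy := nat -> option nat.

Definition first_empty (n : nat) (occ : occupancy) (p : nat) : option nat :=
  ohead [seq k <- iota p (n.+1 - p) | occ k == None].

Definition park_car (n : nat) (occ : occupancy) (i p : nat) : option occupancy :=
  match first_empty n occ p with
  | Some s => Some (fun k => if k == s then Some i else occ k)
  | None => None
  end.

Fixpoint park_aux (n : nat) (pi : nat -> nat) (cars : seq nat) (occ : occupancy)
  : option occupancy :=
  match cars with
  | [::] => Some occ
  | i :: cs => match park_car n occ i (pi i) with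
               | Some occ' => park_aux n pi cs occ'
               | None => None
               end
  end.

Definition parking_outcome (m n : nat) (pi : nat -> nat) : option occupancy :=
  park_aux n pi (iota 1 m) (fun _ => None).

Definition is_parking_function (m n : nat) (pi : nat -> nat) : Prop :=
  (forall i, 1 <= i <= m -> 1 <= pi i <= n) /\ parking_outcome m n pi <> None.

(* Bird's eye permutation: the final occupancy (spot -> car, partial). *)
Definition birds_eye (m n : nat) (pi : nat -> nat) (omega : occupancy) : Prop :=
  parking_outcome m n pi = Some omega.

(* A rooted forest on [n]_0 given by its parent map (None = root). *)
Definition parent_step (par : nat -> option nat) (x : nat) : nat :=
  if par x is Some p then p else x.

(* the root of the tree containing x (parents strictly decrease, so n+1
   steps suffice to reach the root) *)
Definition forest_root (n : nat) (par : nat -> option nat) (x : nat) : nat :=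
  iter n.+1 (parent_step par) x.

Definition same_tree (n : nat) (par : nat -> option nat) (x y : nat) : bool :=
  forest_root n par x == forest_root n par y.

Definition increasing_forest (n : nat) (par : nat -> option nat) : Prop :=
  (forall i, n < i -> par i = None) /\
  (forall i p, i <= n -> par i = Some p -> p < i).

(* priority forest: increasing, and the component trees can be ordered
   T_0, T_1, ... so that all labels of T_j are below all labels of T_k for
   j < k; i.e. for any two distinct trees, all labels of one are smaller than
   all labels of the other. *)
Definition priority_forest (n : nat) (par : nat -> option nat) : Prop :=
  increasing_forest n par /\
  (forall x y, x <= n -> y <= n -> ~~ same_tree n par x y -> x < y ->
     forall x' y', x' <= n -> y' <= n ->
       same_tree n par x x' -> same_tree n par y y' -> x' < y').

(* number of edges = number of non-root vertices *)
Definition forest_edges (n : nat) (par : nat -> option nat) : nat :=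
  count (fun i => par i != None) (iota 0 n.+1).

Definition shifted_parent (par : nat -> option nat) (i : nat) : option nat :=
  omap S (par i).

(* Main.v *)
Require Import Defs.
From mathcomp Require Import all_boot.
From mathcomp Require Import zify.

Definition good (n : nat) (pi : nat -> nat) (occ : occupancy) : Prop :=
  forall k c, occ k = Some c ->
    [/\ 1 <= pi c, pi c <= k, k <= n &
        forall j, pi c <= j <= k -> occ j != None].

Lemma ohead_filter_iota (P : pred nat) a len s :
  ohead [seq k <- iota a len | P k] = Some s ->
  [/\ a <= s, s < a + len, P s & forall j, a <= j < s -> ~~ P j].
Proof.
elim: len a => [|len IH] a //=.
case Pa: (P a) => /=.
  case=> <-; split => //; try lia; move=> j; lia.
move=> /IH [h1 h2 h3 h4]; split => //; try lia.
move=> j hj; case: (j =P a) => [-> | ne]; first by rewrite Pa.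
apply: h4; lia.
Qed.

Lemma first_emptyP n occ p s :
  first_empty n occ p = Some s ->
  [/\ p <= s, s <= n, occ s = None & forall j, p <= j < s -> occ j != None].
Proof.
rewrite /first_empty => /(ohead_filter_iota _ _ _ _) [h1 h2 /eqP h3 h4].
split => //; try lia.
Qed.

Lemma count_add (occ : occupancy) s l :
  occ s = None -> uniq l -> s \in l ->
  count (fun k => (if k == s then Some 0 else occ k) != None) l =
  (count (fun k => occ k != None) l).+1.
Proof.
move=> hs ul sl.
have -> : count (fun k => (if k == s then Some 0 else occ k) != None) l =
          count (predU (pred1 s) (fun k => occ k != None)) l.
  by apply: eq_count => k /=; case: (k =P s).
have := count_predUI (pred1 s) (fun k => occ k != None) l.
have -> : count (predI (pred1 s) (fun k => occ k != None)) l = 0.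
  rewrite (eq_count (a2 := pred0)) ?count_pred0 // => k /=.
  by case: (k =P s) => // ->; rewrite hs.
rewrite count_uniq_mem // sl addn0 => ->; by rewrite add1n.
Qed.

Lemma park_auxP n pi cars occ omega (l : seq nat) :
  uniq l -> (forall s, s <= n -> s \in l) ->
  (forall i, i \in cars -> 1 <= pi i) -> good n pi occ ->
  park_aux n pi cars occ = Some omega ->
  good n pi omega /\
  count (fun k => omega k != None) l =
  count (fun k => occ k != None) l + size cars.
Proof.
move=> ul hl; elim: cars occ => [|i cs IH] occ hpi gocc /=.
  by case=> <-; rewrite addn0.
rewrite /park_car.
case fe: (first_empty n occ (pi i)) => [s|] //.
have [h1 h2 h3 h4] := first_emptyP _ _ _ _ fe.
have hi : 1 <= pi i by apply: hpi; rewrite inE eqxx.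
set occ' := fun k => if k == s then Some i else occ k.
move=> /IH [].
- by move=> j hj; apply: hpi; rewrite inE hj orbT.
- move=> k c; rewrite /occ'; case: (k =P s) => [-> [<-] | ne ok].
    split => //; move=> j hj; case: (j =P s) => // nj.
    apply: h4; lia.
  have [g1 g2 g3 g4] := gocc k c ok; split => //.
  by move=> j /g4; case: (j =P s).
- move=> g e; split => //.
  rewrite e.
  have -> : count (fun k => occ' k != None) l =
            count (fun k => (if k == s then Some 0 else occ k) != None) l.
    by apply: eq_count => k; rewrite /occ'; case: (k =P s).
  rewrite count_add //; last exact: hl.
  by rewrite addSn addnS.
Qed.

Section Forest.
Variables (n : nat) (pi : nat -> nat) (omega : occupancy).
Hypothesis gom : good n pi omega.

Definition par (j : nat) : option nat := omap (fun c => (pi c).-1) (omega j).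

Fixpoint R (x : nat) : nat :=
  match x with
  | 0 => 0
  | x'.+1 => if omega x'.+1 is None then x'.+1 else R x'
  end.

Lemma omega0 : omega 0 = None.
Proof. case e: (omega 0) => [c|] //; have [? ? ? ?] := gom _ _ e; lia. Qed.

Lemma R_le x : R x <= x.
Proof. elim: x => //= x IH; case: (omega x.+1) => //; lia. Qed.

Lemma R_root x : omega (R x) = None.
Proof. elim: x => [|x IH] /=; first exact: omega0. by case e: (omega x.+1). Qed.

Lemma R_id x : omega x = None -> R x = x.
Proof. by case: x => //= x ->. Qed.

Lemma R_mono x y : x <= y -> R x <= R y.
Proof.
elim: y => [|y IH] hxy; first by have -> : x = 0 by lia.
case: (x =P y.+1) => [-> //| ne].
have := IH ltac:(lia); rewrite /=; case: (omega y.+1) => // _.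
have := R_le x; lia.
Qed.

Lemma R_interval a x : 1 <= a -> a <= x.+1 ->
  (forall j, a <= j <= x -> omega j != None) -> R x = R a.-1.
Proof.
elim: x => [|x IH] h1 h2 h3; first by have -> : a = 1 by lia.
case: (a =P x.+2) => [-> //| ne].
rewrite /=; case e: (omega x.+1) => [c|]; last by have := h3 x.+1 ltac:(lia); rewrite e.
apply: IH => //; first lia.
move=> j hj; apply: h3; lia.
Qed.

Lemma step_R x : R (parent_step par x) = R x.
Proof.
rewrite /parent_step /par; case e: (omega x) => [c|] //=.
have [g1 g2 g3 g4] := gom _ _ e.
symmetry; apply: R_interval => //; lia.
Qed.

Lemma par_None x : (par x == None) = (omega x == None).
Proof. by rewrite /par; case: (omega x). Qed.

Lemma iter_step k x :
  R (iter k (parent_step par) x) = R x /\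
  (par (iter k (parent_step par) x) = None \/ iter k (parent_step par) x + k <= x).
Proof.
elim: k => [|k [IH1 IH2]] /=; first by split => //; right; lia.
split; first by rewrite step_R.
set y := iter k _ x in IH1 IH2 *.
rewrite /parent_step; case e: (par y) => [p|]; last by left.
case: IH2 => [h|IH2]; first by rewrite h in e.
right.
move: e; rewrite /par; case e: (omega y) => [c|] //= [<-].
have [? ? ? ?] := gom _ _ e; lia.
Qed.

Lemma forest_rootE x : x <= n -> forest_root n par x = R x.
Proof.
move=> hx; rewrite /forest_root.
have [h1 [h2|h2]] := iter_step n.+1 x; last lia.
rewrite -h1 R_id //; apply/eqP; by rewrite -par_None h2.
Qed.

End Forest.

Theorem lemma4p1 (m n : nat) (pi : nat -> nat) (omega : occupancy) :
  is_parking_function m n pi ->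
  birds_eye m n pi omega ->
  exists par : nat -> option nat,
    [/\ priority_forest n par,
        forest_edges n par = m &
        forall j, 1 <= j <= n -> shifted_parent par j = omap pi (omega j)].
Proof.
move=> [hpi _] hb.
have hl : forall s, s <= n -> s \in iota 0 n.+1.
  by move=> s hs; rewrite mem_iota; lia.
have hc : forall i, i \in iota 1 m -> 1 <= pi i.
  move=> i; rewrite mem_iota => hi.
  have := hpi i ltac:(lia); lia.
have g0 : good n pi (fun _ => None) by [].
have [gom cnt] := park_auxP n pi (iota 1 m) (fun _ => None) omega (iota 0 n.+1) (iota_uniq 0 n.+1) hl hc g0 hb.
exists (par pi omega); split.
- split.
  + split.
    * move=> i hi; rewrite /par; case e: (omega i) => [c|] //.
      have [? ? ? ?] := gom _ _ e; lia.
    * move=> i p _; rewrite /par; case e: (omega i) => [c|] //= [<-].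
      have [? ? ? ?] := gom _ _ e; lia.
  + move=> x y hx hy; rewrite /same_tree !forest_rootE // => hne hxy x' y' hx' hy'.
    rewrite !forest_rootE // => /eqP e1 /eqP e2.
    rewrite ltnNge; apply/negP => hle.
    have h1 := R_mono _ _ _ hle; have h2 := R_mono _ _ _ (ltnW hxy).
    move: (h1 omega) (h2 omega); move/eqP: hne; rewrite e1 e2; lia.
- rewrite /forest_edges (eq_count (a2 := fun k => omega k != None)).
    by rewrite cnt size_iota (eq_count (a2 := pred0)) ?count_pred0.
  by move=> k /=; rewrite par_None.
- move=> j _; rewrite /shifted_parent /par; case e: (omega j) => [c|] //=.
  have [? ? ? ?] := gom _ _ e; congr Some; lia.
Qed.
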